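(* Let $q\ge 2$, $n\ge 1$, $1\le \ell\le n$, $f:\mathbb{Z}_q^n\to\mathbb{R}$, and let $M$ be the $q$-ary Möbius transform of $f$. Assume $M[\mathbf{k}]=0$ for every $\mathbf{k}$ with $\|\mathbf{k}\|_0>\ell$. Then for every $T\subseteq D$ with $|T|\le\ell$, the Faith-Shap interaction index of order $\ell$ satisfies $$I^{FSI}(T)\;=\;a(v,T)\;=\;(-1)^{|T|}\sum_{\substack{\mathbf{k}\in\mathbb{Z}_q^n\\ k_j\neq 0\ \forall j\in T}}\frac{1}{q^{\|\mathbf{k}\|_0}}\,M[\mathbf{k}].$$
   Context: Elements of $\mathbb{Z}_q^n$ are vectors $\mathbf{m}=(m_1,\dots,m_n)$ with $m_i\in\{0,1,\dots,q-1\}$. $D=\{1,\dots,n\}$, and for $T\subseteq D$, $\bar T=D\setminus T$. $\|\mathbf{k}\|_0$ is the number of nonzero coordinates of $\mathbf{k}$. Partial order: $\mathbf{m}\le\mathbf{k}$ iff for every $i$, $m_i=k_i$ or $m_i=0$; in that case $\mathbf{k}-\mathbf{m}$ is the coordinatewise integer difference. The $q$-ary Möbius transform of $f$ is $M[\mathbf{k}]=\sum_{\mathbf{m}\le\mathbf{k}}(-1)^{\|\mathbf{k}-\mathbf{m}\|_0} f(\mathbf{m})$. The value function (query encoded as the all-zeros vector, uniform marginalization) is $v_T=\frac{1}{q^{|\bar T|}}\sum_{\mathbf{r}\in\mathbb{Z}_q^n:\ \mathbf{r}_T=\mathbf{0}} f(\mathbf{r})$ for $T\subseteq D$, and its set Möbius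 transform is $a(v,S)=\sum_{T\subseteq S}(-1)^{|S|-|T|}v_T$. The Faith-Shap interaction index of maximum order $\ell$ is defined, for $T\subseteq D$ with $|T|\le \ell$, by $$I^{FSI}(T)=a(v,T)+(-1)^{\ell-|T|}\frac{|T|}{\ell+|T|}\binom{\ell}{|T|}\sum_{\substack{S\supsetneq T\\ |S|>\ell}}\frac{\binom{|S|-1}{\ell}}{\binom{|S|+\ell-1}{\ell+|T|}}\,a(v,S).$$ *)

(* Defs.v *)
From HB Require Import structures.
From mathcomp Require Import all_boot all_order all_algebra.
Set Implicit Arguments. Unset Strict Implicit. Unset Printing Implicit Defensive.
Import Order.TTheory GRing.Theory Num.Theory.
Local Open Scope ring_scope.

(* Z_q^n is represented by {ffun 'I_n -> 'I_q}; D = 'I_n; subsets T : {set 'I_n}. *)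
Section Defs.
Variables (R : realFieldType) (q n : nat).
Notation vec := {ffun 'I_n -> 'I_q}.

Definition nnz (k : vec) : nat := #|[set i | val (k i) != 0%N]|.

Definition vle (m k : vec) : bool :=
  [forall i, (m i == k i) || (val (m i) == 0%N)].

(* ||k - m||_0 for the coordinatewise difference (used only when m <= k,
   where every coordinate difference is 0 or k_i >= 0, so nat subtraction
   is the integer difference) *)
Definition nnz_diff (k m : vec) : nat :=
  #|[set i | (val (k i) - val (m i))%N != 0%N]|.

Definition qmobius (f : vec -> R) (k : vec) : R :=
  \sum_(m : vec | vle m k) (-1) ^+ nnz_diff k m * f m.

Definition vfun (f : vec -> R) (T : {set 'I_n}) : R :=
  ((q%:R ^+ #|~: T|)^-1) *
  \sum_(r : vec | [forall i in T, val (r i) == 0%N]) f r.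

Definition amob (f : vec -> R) (S : {set 'I_n}) : R :=
  \sum_(T in powerset S) (-1) ^+ (#|S| - #|T|) * vfun f T.

Definition FSI (f : vec -> R) (ell : nat) (T : {set 'I_n}) : R :=
  amob f T +
  (-1) ^+ (ell - #|T|) * ((#|T|%:R / (ell + #|T|)%:R) * 'C(ell, #|T|)%:R) *
  \sum_(S : {set 'I_n} | (T \proper S) && (ell < #|S|)%N)
     ('C(#|S| - 1, ell)%:R / 'C(#|S| + ell - 1, ell + #|T|)%:R) * amob f S.

End Defs.

(* Main.v *)
Require Import Defs.
From HB Require Import structures.
From mathcomp Require Import all_boot all_order all_algebra.
From mathcomp Require Import ring lra.
Import Order.TTheory GRing.Theory Num.Theory.
Local Open Scope ring_scope.

Lemma prod_constn (R : realFieldType) n (x : R) : \prod_(i < n) x = x ^+ n.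
Proof. by rewrite -[in RHS](card_ord n) -prodr_const. Qed.
Lemma sum_constn (R : realFieldType) n (x : R) : \sum_(i < n) x = x *+ n.
Proof. by rewrite -[in RHS](card_ord n) -sumr_const. Qed.

Lemma prod_if (R : realFieldType) (I : finType) (c : pred I) (F : I -> R) :
  \prod_i (if c i then F i else 0) = if [forall i, c i] then \prod_i F i else 0.
Proof.
case: (boolP [forall i, c i]) => [/forallP H | /forallPn [i Hi]].
  by apply: eq_bigr => i _; rewrite H.
by rewrite (bigD1 i) //= (negbTE Hi) mul0r.
Qed.

Lemma prod_cond_const (R : realFieldType) (I : finType) (c : pred I) (x : R) :
  \prod_i (if c i then x else 1) = x ^+ #|[set i | c i]|.
Proof. by rewrite -big_mkcond -prodr_const; apply: eq_bigl => i; rewrite inE. Qed.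

Lemma sum_powerset_exp (R : realFieldType) (I : finType) (A : {set I}) (x : R) :
  \sum_(T in powerset A) x ^+ #|T| = (1 + x) ^+ #|A|.
Proof.
rewrite -prodr_const [RHS]big_mkcond /=.
transitivity (\prod_i ((if i \in A then x else 0) + 1)); last first.
  by apply: eq_bigr => i _; case: ifP => _; rewrite ?add0r // addrC.
rewrite bigA_distr big_mkcond /=. apply: eq_bigr => J _; rewrite powersetE.
case: (boolP (J \subset A)) => HJ.
  rewrite -prodr_const big_mkcond /=; apply: eq_bigr => i _.
  by case: ifP => // iJ; rewrite (subsetP HJ).
case/subsetPn: HJ => i iJ niA.
by rewrite (bigD1 i) //= iJ (negbTE niA) mul0r.
Qed.

Section Main.
Variables (R : realFieldType) (q' n : nat).
Local Notation q := q'.+1.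
Local Notation vec := {ffun 'I_n -> 'I_q}.

Lemma qnz : (q%:R : R) != 0.
Proof. by rewrite pnatr_eq0. Qed.

Definition Zs (S : {set 'I_n}) (m : vec) := [set i | (i \in S) && (val (m i) == 0%N)].

Definition gco (S : {set 'I_n}) (m : vec) (i : 'I_n) (x : 'I_q) : R :=
  if ((i \in S) ==> (val x != 0%N)) && ((m i == x) || (val (m i) == 0%N)) then
    (if val x != 0%N then (q%:R)^-1 else 1) *
    (if (val x - val (m i))%N != 0%N then -1 else 1) else 0.

Lemma gco_prod (S : {set 'I_n}) (m k : vec) :
  (if [forall j in S, val (k j) != 0%N] && vle m k then
     (q%:R ^+ nnz k)^-1 * (-1) ^+ nnz_diff k m else 0 : R)
  = \prod_i gco S m i (k i).
Proof.
rewrite /gco prod_if big_split /= !prod_cond_const -exprVn.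
have -> : [forall i, ((i \in S) ==> (val (k i) != 0%N)) &&
                     ((m i == k i) || (val (m i) == 0%N))]
          = [forall j in S, val (k j) != 0%N] && vle m k.
  apply/forallP/andP => [H | [/forallP H1 /forallP H2] i].
    by split; apply/forallP => i; case/andP: (H i).
  by rewrite H1 H2.
by [].
Qed.

Lemma gco_sum (S : {set 'I_n}) (m : vec) (i : 'I_n) :
  \sum_x gco S m i x = (if (i \in S) && (val (m i) == 0%N) then 1 - q%:R else 1) / q%:R.
Proof.
have hq := qnz.
rewrite /gco; case: (boolP (val (m i) == 0%N)) => Hm.
  rewrite big_ord_recl /= (eqP Hm) orbT.
  have Hb : forall j : 'I_q', (bump 0 j - 0)%N != 0%N.
    by move=> j; rewrite subn0 eq_sym neq_bump.
  under eq_bigr => j _ do rewrite Hb implybT orbT /= mulrN1.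
  rewrite sum_constn andbT.
  rewrite -mulr_natr -natr1.
  case: (i \in S) => /=; field; by rewrite natr1.
rewrite (bigD1 (m i)) //= eqxx Hm implybT subnn eqxx /= big1 ?andbF ?mulr1 ?addr0 //.
  by rewrite mul1r.
move=> x Hx; by rewrite [m i == x]eq_sym (negbTE Hx) andbF.
Qed.

Lemma c_formula (S : {set 'I_n}) (m : vec) :
  \sum_(k : vec) (if [forall j in S, val (k j) != 0%N] && vle m k then
     (q%:R ^+ nnz k)^-1 * (-1) ^+ nnz_diff k m else 0 : R)
  = (q%:R ^+ n)^-1 * (1 - q%:R) ^+ #|Zs S m|.
Proof.
under eq_bigr => k _ do rewrite gco_prod.
rewrite -bigA_distr_bigA /=.
under eq_bigr => i _ do rewrite gco_sum.
rewrite big_split /= prod_cond_const prod_constn exprVn mulrC.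
by [].
Qed.


Lemma sign_sub (a b : nat) : (b <= a)%N -> (-1) ^+ (a - b) = (-1) ^+ a * (-1) ^+ b :> R.
Proof.
move=> H; by rewrite -{2}(subnK H) exprD -mulrA -expr2 sqrr_sign mulr1.
Qed.

Lemma d_formula (S : {set 'I_n}) (m : vec) :
  \sum_(T in powerset S) (-1) ^+ (#|S| - #|T|) * (q%:R ^+ #|~: T|)^-1 *
     (if [forall i in T, val (m i) == 0%N] then 1 else 0)
  = (-1) ^+ #|S| * ((q%:R ^+ n)^-1 * (1 - q%:R) ^+ #|Zs S m| : R).
Proof.
have hq := qnz.
set Zm := [set i | val (m i) == 0%N].
transitivity (\sum_(T in powerset (S :&: Zm))
   (-1) ^+ #|S| * (q%:R ^+ n)^-1 * (- q%:R) ^+ #|T| : R).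
  rewrite [LHS]big_mkcond [RHS]big_mkcond; apply: eq_bigr => T _.
  have -> : [forall i in T, val (m i) == 0%N] = (T \subset Zm).
    apply/forall_inP/subsetP => H i /H; by rewrite inE.
  rewrite powersetI in_setI !powersetE.
  case: (boolP (T \subset S)) => HS; case: (boolP (T \subset Zm)) => HZ //=;
    rewrite ?mulr0 ?mulr1 //.
  rewrite sign_sub ?subset_leq_card // (exprNn (q%:R : R)).
  have -> : (q%:R : R) ^+ n = q%:R ^+ #|T| * q%:R ^+ #|~: T|
    by rewrite -exprD cardsC card_ord.
  rewrite invfM.
  have hT : (q%:R : R) ^+ #|T| != 0 by rewrite expf_neq0.
  have hC : (q%:R : R) ^+ #|~: T| != 0 by rewrite expf_neq0.
  field; by apply/andP; split; apply: expf_neq0; rewrite pnatr_eq0.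
rewrite -mulr_sumr sum_powerset_exp.
have -> : S :&: Zm = Zs S m by apply/setP => i; rewrite !inE.
by rewrite mulrA.
Qed.

Lemma amob_formula (f : vec -> R) (S : {set 'I_n}) :
  amob f S = (-1) ^+ #|S| *
    \sum_(k : vec | [forall j in S, val (k j) != 0%N])
       ((q%:R ^+ nnz k)^-1 * qmobius f k).
Proof.
transitivity (\sum_(m : vec) ((-1) ^+ #|S| * ((q%:R ^+ n)^-1 * (1 - q%:R) ^+ #|Zs S m|)) * f m).
  rewrite /amob.
  transitivity (\sum_(T in powerset S) \sum_(m : vec)
     ((-1) ^+ (#|S| - #|T|) * (q%:R ^+ #|~: T|)^-1 *
     (if [forall i in T, val (m i) == 0%N] then 1 else 0)) * f m).
    apply: eq_bigr => T _; rewrite /vfun big_mkcond mulrA mulr_sumr.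
    apply: eq_bigr => m _; case: ifP => _; by rewrite ?mulr1 ?mul1r ?mulr0 ?mul0r.
  rewrite exchange_big /=; apply: eq_bigr => m _.
  by rewrite -mulr_suml d_formula.
transitivity ((-1) ^+ #|S| * \sum_(m : vec) (\sum_(k : vec)
  (if [forall j in S, val (k j) != 0%N] && vle m k then
     (q%:R ^+ nnz k)^-1 * (-1) ^+ nnz_diff k m else 0)) * f m).
  rewrite mulr_sumr; apply: eq_bigr => m _; by rewrite c_formula !mulrA.
congr (_ * _).
under eq_bigr => m _ do rewrite mulr_suml.
rewrite exchange_big /= [RHS]big_mkcond; apply: eq_bigr => k _.
case: ifP => Pk /=.
  rewrite /qmobius mulr_sumr [RHS]big_mkcond; apply: eq_bigr => m _.
  by case: ifP => _; rewrite ?mulr0 ?mul0r // mulrA.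
by apply: big1 => m _; rewrite mul0r.
Qed.

End Main.


Theorem theorem3 (R : realFieldType) (q n ell : nat)
  (hq : (2 <= q)%N) (hn : (1 <= n)%N) (hl1 : (1 <= ell)%N) (hln : (ell <= n)%N)
  (f : {ffun 'I_n -> 'I_q} -> R)
  (hM : forall k : {ffun 'I_n -> 'I_q}, (ell < nnz k)%N -> qmobius f k = 0)
  (T : {set 'I_n}) (hT : (#|T| <= ell)%N) :
  FSI f ell T = amob f T /\
  amob f T = (-1) ^+ #|T| *
    \sum_(k : {ffun 'I_n -> 'I_q} | [forall j in T, val (k j) != 0%N])
       ((q%:R ^+ nnz k)^-1 * qmobius f k).
Proof.
move: f hM; case: q hq => [|q'] // hq f hM.
split; last exact: amob_formula.
rewrite /FSI.
suff -> : \sum_(S : {set 'I_n} | (T \proper S) && (ell < #|S|)%N)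
     ('C(#|S| - 1, ell)%:R / 'C(#|S| + ell - 1, ell + #|T|)%:R) * amob f S = 0.
  by rewrite mulr0 addr0.
apply: big1 => S /andP[_ hS].
rewrite amob_formula big1 ?mulr0 // => k /forallP Hk.
rewrite hM ?mulr0 //.
apply: leq_trans hS _; rewrite /nnz; apply: subset_leq_card.
by apply/subsetP => i iS; rewrite inE; exact: (implyP (Hk i) iS).
Qed.
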